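(* Let $c<-14$ and let $u\in\mathbb{R}^3$ with $\kappa(u)=c$. Then there exists $\gamma\in\Gamma$ such that $u'=\gamma u=(x',y',z')$ satisfies at least one of: (M) $u'\in\Omega_0^M$; (E) $-2\le \bar z(u')\le 2$, i.e. $-2\le -x'y'-z'\le 2$; ($\Sigma$) $x'=0$ or $y'=0$.
   Context: $\kappa(x,y,z)=-x^2-y^2+z^2+xyz-2$ on $\mathbb{R}^3$; for $u=(x,y,z)$ set $\bar z(u)=-xy-z$. $Q_x(x,y,z)=(yz-x,y,z)$, $Q_y(x,y,z)=(x,xz-y,z)$, $Q_z(x,y,z)=(x,y,-xy-z)$. $\Gamma$ is the group generated by $Q_x,Q_y,Q_z$, the sign changes $(x,y,z)\mapsto(-x,y,-z)$, $(x,-y,-z)$, $(-x,-y,z)$ and the transposition $(x,y,z)\mapsto(y,x,z)$; all preserve $\kappa$. $\Omega_0^M=\{(x,y,z): z<-2,\ xy+z>2\}$. *)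

(* Defs.v *)
From Stdlib Require Import Reals.
Open Scope R_scope.

Definition pt := (R * R * R)%type.

Definition kappa (u : pt) : R :=
  let '(x, y, z) := u in - x^2 - y^2 + z^2 + x*y*z - 2.

Definition zbar (u : pt) : R := let '(x, y, z) := u in - x*y - z.

Definition Qx (u : pt) : pt := let '(x, y, z) := u in (y*z - x, y, z).
Definition Qy (u : pt) : pt := let '(x, y, z) := u in (x, x*z - y, z).
Definition Qz (u : pt) : pt := let '(x, y, z) := u in (x, y, - x*y - z).
Definition S1 (u : pt) : pt := let '(x, y, z) := u in (- x, y, - z).
Definition S2 (u : pt) : pt := let '(x, y, z) := u in (x, - y, - z).
Definition S3 (u : pt) : pt := let '(x, y, z) := u in (- x, - y, z).
Definition Tr (u : pt) : pt := let '(x, y, z) := u in (y, x, z).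

Inductive generator : (pt -> pt) -> Prop :=
| gen_Qx : generator Qx
| gen_Qy : generator Qy
| gen_Qz : generator Qz
| gen_S1 : generator S1
| gen_S2 : generator S2
| gen_S3 : generator S3
| gen_Tr : generator Tr.

(* Each generator is an
   involution (its own inverse), so the generated group is exactly the set of
   finite compositions of generators (including the identity). *)
Inductive in_Gamma : (pt -> pt) -> Prop :=
| Gamma_id : in_Gamma (fun u => u)
| Gamma_comp : forall g s, generator s -> in_Gamma g ->
    in_Gamma (fun u => s (g u)).

Definition Omega0M (u : pt) : Prop :=
  let '(x, y, z) := u in z < -2 /\ x*y + z > 2.

(* Main.v *)
Require Import Defs.
From Stdlib Require Import Reals Lra Psatz.
Open Scope R_scope.

Definition PP (u : pt) : Prop :=
  Omega0M u \/ (-2 <= zbar u <= 2) \/ (fst (fst u) = 0 \/ snd (fst u) = 0).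
Definition GG (u : pt) : Prop := exists g : pt -> pt, in_Gamma g /\ PP (g u).

Lemma comp_r g s : in_Gamma g -> generator s -> in_Gamma (fun u => g (s u)).
Proof.
  intros Hg Hs. induction Hg.
  - exact (Gamma_comp (fun u => u) s Hs Gamma_id).
  - exact (Gamma_comp _ s0 H IHHg).
Qed.

Lemma G_step s p : generator s -> GG (s p) -> GG p.
Proof.
  intros Hs [g [Hg HP]]. exists (fun u => g (s u)). split; [apply comp_r; auto | exact HP].
Qed.

Lemma G_id p : PP p -> GG p.
Proof. intros H. exists (fun u => u). split; [constructor | exact H]. Qed.

Lemma kappa_eq x y z : kappa (x,y,z) = - x^2 - y^2 + z^2 + x*y*z - 2.
Proof. reflexivity. Qed.

Lemma try_done c x y z : kappa (x,y,z) = c ->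
  GG (x,y,z) \/ (4 < z^2 /\ 4 < (-x*y-z)^2 /\ z*(-x*y-z) < 0).
Proof.
  intros Hk.
  destruct (Rle_lt_dec (z^2) 4) as [H1|H1].
  { left. apply (G_step Qz); [constructor|]. apply G_id. right; left.
    simpl. split; nra. }
  destruct (Rle_lt_dec ((-x*y-z)^2) 4) as [H2|H2].
  { left. apply G_id. right; left. simpl. split; nra. }
  destruct (Rlt_le_dec (z*(-x*y-z)) 0) as [H3|H3].
  { right; auto. }
  left.
  destruct (Rlt_le_dec z 0) as [H4|H4].
  - assert (Hw : -x*y - z <= 0) by nra.
    assert (z < -2) by nra. assert (-x*y - z < -2) by nra.
    apply G_id. left. simpl. split; lra.
  - assert (Hw : 0 <= -x*y - z) by nra.
    assert (z > 2) by nra. assert (-x*y - z > 2) by nra.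
    apply (G_step S2); [constructor|]. apply G_id. left. simpl. split; lra.
Qed.

Lemma core c x y z : c < -14 -> kappa (x,y,z) = c -> 4 < z^2 ->
  z*(-x*y-z) < 0 -> z^2 <= (-x*y-z)^2 -> y^2 <= x^2 ->
  kappa (y*z-x, y, z) = c /\
  ((y*z-x)^2 <= x^2 - 2*y^2 \/ (y*z-x)^2 <= x^2 + (c+2)).
Proof.
  intros hc Hk Hz Hzz Hmin Hxy. rewrite kappa_eq in Hk.
  split. { rewrite kappa_eq. rewrite <- Hk. ring. }
  set (D := -(c+2)).
  assert (HA : x * (y*z - x) = y^2 - z^2 - D) by (unfold D; nra).
  assert (Hx2 : x^2 + y^2 > D) by (unfold D; nra).
  assert (Hx : x <> 0) by (intro; subst; nra).
  assert (Hx2p : 0 < x^2) by (generalize (Rsqr_pos_lt x Hx); unfold Rsqr; nra).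
  assert (Ht : 0 <= x*y*z).
  { set (w := x*y) in *. assert (w*z = x*y*z) by (unfold w; ring).
    nra. }
  set (x' := y*z - x) in *.
  assert (Hsq : x'^2 * x^2 = (y^2 - z^2 - D)^2) by (rewrite <- HA; ring).
  destruct (Rle_lt_dec (y^2 - z^2 - D) 0) as [HA0|HA0].
  - left.
    assert (E1 : y^2 - z^2 - D = - (x^2 - x*y*z)) by (unfold D; nra).
    assert (Ht2 : 2*y^2 <= x*y*z).
    { assert ((x*y*z)^2 >= (2*y^2)^2).
      { assert ((x*y*z)^2 = x^2*y^2*z^2) by ring.
        assert (x^2*y^2*z^2 >= y^2*y^2*4).
        { apply Rle_ge. assert (0 <= y^2) by nra.
          apply Rmult_le_compat; nra. }
        nra. }
      nra. }
    assert (x'^2 * x^2 <= (x^2 - x*y*z) * x^2).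
    { rewrite Hsq, E1. nra. }
    assert (x'^2 <= x^2 - x*y*z).
    { apply (Rmult_le_reg_r (x^2)); auto. }
    lra.
  - right. fold D. 
    assert (HAx : y^2 - z^2 - D <= x^2 - D) by nra.
    assert (x'^2 * x^2 <= (x^2 - D) * x^2).
    { rewrite Hsq. assert (HD : D > 12) by (unfold D; lra).
      apply Rle_trans with ((x^2-D)*(x^2-D)).
      - replace ((y ^ 2 - z ^ 2 - D) ^ 2) with ((y ^ 2 - z ^ 2 - D) * (y ^ 2 - z ^ 2 - D)) by ring.
        apply Rmult_le_compat; lra.
      - apply Rmult_le_compat_l; lra. }
    assert (x'^2 <= x^2 - D).
    { apply (Rmult_le_reg_r (x^2)); auto. }
    unfold D in *; lra.
Qed.

Lemma reduce c x y z : c < -14 -> kappa (x,y,z) = c -> 4 < z^2 ->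
  4 < (-x*y-z)^2 -> z*(-x*y-z) < 0 -> y^2 <= x^2 ->
  exists x' z0, (GG (x',y,z0) -> GG (x,y,z)) /\ kappa (x',y,z0) = c /\
    (x'^2 <= x^2 - 2*y^2 \/ x'^2 <= x^2 + (c+2)).
Proof.
  intros hc Hk Hz Hzb Hzz Hxy.
  destruct (Rle_lt_dec (z^2) ((-x*y-z)^2)) as [Hm|Hm].
  - destruct (core c x y z hc Hk Hz Hzz Hm Hxy) as [K1 K2].
    exists (y*z-x), z. split; [|split; auto].
    intro HG. apply (G_step Qx); [constructor|exact HG].
  - set (zb := -x*y-z) in *.
    assert (Hk' : kappa (x,y,zb) = c).
    { rewrite kappa_eq in *. unfold zb. rewrite <- Hk. ring. }
    assert (Eb : -x*y - zb = z) by (unfold zb; ring).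
    assert (Hzz' : zb * (-x*y - zb) < 0) by (rewrite Eb; lra).
    assert (Hm' : zb^2 <= (-x*y-zb)^2) by (rewrite Eb; lra).
    destruct (core c x y zb hc Hk' Hzb Hzz' Hm' Hxy) as [K1 K2].
    exists (y*zb-x), zb. split; [|split; auto].
    intro HG. apply (G_step Qz); [constructor|].
    apply (G_step Qx); [constructor|exact HG].
Qed.

Lemma lemA c (hc : c < -14) y (hy : y <> 0) (hyD : 2*y^2 < -(c+2)) :
  forall n x z, kappa (x,y,z) = c -> x^2 + y^2 <= INR n * (2*y^2) -> GG (x,y,z).
Proof.
  assert (Hy2 : 0 < y^2) by (generalize (Rsqr_pos_lt y hy); unfold Rsqr; nra).
  induction n as [|n IH]; intros x z Hk Hb.
  - simpl in Hb. assert (0 <= x^2) by nra. lra.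
  - destruct (try_done c x y z Hk) as [HG|[Hz [Hzb Hzz]]]; auto.
    assert (Hxy : y^2 <= x^2).
    { rewrite kappa_eq in Hk. nra. }
    destruct (reduce c x y z hc Hk Hz Hzb Hzz Hxy) as [x' [z0 [Himp [Hk' Hd]]]].
    apply Himp. apply (IH x' z0 Hk').
    rewrite S_INR in Hb. rewrite Rmult_plus_distr_r, Rmult_1_l in Hb.
    destruct Hd; lra.
Qed.

Lemma lemB_step c (hc : c < -14) (Q : R)
  (HQ : forall x y z, kappa (x,y,z) = c -> x^2 + y^2 <= Q -> GG (x,y,z))
  x y z : kappa (x,y,z) = c -> y^2 <= x^2 -> 4 < z^2 -> 4 < (-x*y-z)^2 ->
  z*(-x*y-z) < 0 -> x^2 + y^2 <= Q - (c+2) -> GG (x,y,z).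
Proof.
  intros Hk Hxy Hz Hzb Hzz Hb.
  destruct (Req_dec y 0) as [Hy0|Hy0].
  { apply G_id. right; right; right. simpl. auto. }
  destruct (Rlt_le_dec (2*y^2) (-(c+2))) as [Hs|Hs].
  - assert (Hy2 : 0 < y^2) by (generalize (Rsqr_pos_lt y Hy0); unfold Rsqr; nra).
    destruct (INR_unbounded ((x^2+y^2)/(2*y^2))) as [n Hn].
    apply (lemA c hc y Hy0 Hs n x z Hk).
    apply Rlt_le. apply (Rmult_lt_compat_r (2*y^2)) in Hn; [|lra].
    unfold Rdiv in Hn. rewrite Rmult_assoc, Rinv_l in Hn; lra.
  - destruct (reduce c x y z hc Hk Hz Hzb Hzz Hxy) as [x' [z0 [Himp [Hk' Hd]]]].
    apply Himp. apply (HQ x' y z0 Hk'). destruct Hd; lra.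
Qed.

Lemma lemB c (hc : c < -14) :
  forall n x y z, kappa (x,y,z) = c -> x^2 + y^2 <= INR n * (-(c+2)) -> GG (x,y,z).
Proof.
  induction n as [|n IH]; intros x y z Hk Hb.
  - simpl INR in Hb. rewrite Rmult_0_l in Hb. exfalso. rewrite kappa_eq in Hk.
    assert (Hx: x = 0) by (apply Rsqr_0_uniq; unfold Rsqr; nra). assert (Hy: y = 0) by (apply Rsqr_0_uniq; unfold Rsqr; nra). subst. nra.
  - destruct (try_done c x y z Hk) as [HG|[Hz [Hzb Hzz]]]; auto.
    rewrite S_INR, Rmult_plus_distr_r, Rmult_1_l in Hb.
    destruct (Rle_lt_dec (y^2) (x^2)) as [Hxy|Hxy].
    + apply (lemB_step c hc (INR n * (-(c+2))) IH x y z); auto.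
    + apply (G_step Tr); [constructor|]. simpl.
      assert (Hk' : kappa (y,x,z) = c) by (rewrite kappa_eq in *; rewrite <- Hk; ring).
      assert (E : -y*x - z = -x*y - z) by ring.
      apply (lemB_step c hc (INR n * (-(c+2))) IH y x z); try rewrite E; auto; lra.
Qed.

Theorem mainTheorem4 (c : R) (hc : c < -14) (u : pt) (hu : kappa u = c) :
  exists g : pt -> pt, in_Gamma g /\
    (Omega0M (g u) \/
     (-2 <= zbar (g u) <= 2) \/
     (fst (fst (g u)) = 0 \/ snd (fst (g u)) = 0)).
Proof.
  destruct u as [[x y] z].
  destruct (INR_unbounded ((x^2+y^2)/(-(c+2)))) as [n Hn].
  apply (lemB c hc n x y z hu).
  apply Rlt_le. apply (Rmult_lt_compat_r (-(c+2))) in Hn; [|lra].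
  unfold Rdiv in Hn. rewrite Rmult_assoc, Rinv_l in Hn; lra.
Qed.
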